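(* Let $E$ be a normed space and $\tau$ a linear topology on $E$ weaker than the norm topology. Then the following are equivalent: (a) $\tau$ equals the norm topology; (b) $0_E$ is $\tau$-separated from $\mathrm{S}_E$; (c) $\overline{\mathrm{B}}_E\not\subset\overline{\mathrm{S}_E}^{\tau}$, where $\overline{\mathrm{S}_E}^{\tau}$ is the $\tau$-closure of $\mathrm{S}_E$.
   Context: $\overline{\mathrm{B}}_E$ is the closed unit ball and $\mathrm{S}_E$ the unit sphere of $E$. $0_E$ is $\tau$-separated from a set $A$ if some $\tau$-neighborhood of $0_E$ is disjoint from $A$. *)

(* Defs.v *)
From HB Require Import structures.
From mathcomp Require Import all_boot all_order all_algebra.
From mathcomp Require Import all_classical all_reals all_analysis.
Set Implicit Arguments. Unset Strict Implicit. Unset Printing Implicit Defensive.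
Import Order.TTheory GRing.Theory Num.Theory.
Import numFieldNormedType.Exports.
Local Open Scope classical_set_scope.
Local Open Scope ring_scope.

Section LinTop.
Variables (R : realType) (E : normedModType R).

Definition is_topology (O : set (set E)) : Prop :=
  O setT /\
  (forall (I : Type) (F : I -> set E), (forall i, O (F i)) -> O (\bigcup_(i in setT) F i)) /\
  (forall A B, O A -> O B -> O (A `&` B)).

Definition tau_nbhs (O : set (set E)) (x : E) (N : set E) : Prop :=
  exists U, O U /\ U x /\ U `<=` N.

(* A linear (vector) topology: addition E x E -> E and scalar multiplication
   R x E -> E are jointly continuous (R with its usual topology). *)
Definition linear_topology (O : set (set E)) : Prop :=
  is_topology O /\
  (forall (x y : E) (W : set E), O W -> W (x + y) ->
     exists U V, [/\ O U, U x, O V, V y &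
       forall u v, U u -> V v -> W (u + v)]) /\
  (forall (a : R) (x : E) (W : set E), O W -> W (a *: x) ->
     exists (e : R) (U : set E), [/\ 0 < e, O U, U x &
       forall b u, `|b - a| < e -> U u -> W (b *: u)]).

Definition weaker_than_norm (O : set (set E)) : Prop :=
  forall A, O A -> open A.

Definition tau_closure (O : set (set E)) (A : set E) : set E :=
  [set x | forall N, tau_nbhs O x N -> N `&` A !=set0].

Definition unit_sphere : set E := [set x | `|x| = 1].
Definition closed_unit_ball : set E := [set x | `|x| <= 1].

Definition tau_separated0 (O : set (set E)) (A : set E) : Prop :=
  exists N, tau_nbhs O 0 N /\ N `&` A = set0.

End LinTop.

(* Main.v *)
Require Import Defs.
From HB Require Import structures.
From mathcomp Require Import all_boot all_order all_algebra.
From mathcomp Require Import all_classical all_reals all_analysis.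
From mathcomp Require Import ring lra.
Import Order.TTheory GRing.Theory Num.Theory.
Import numFieldNormedType.Exports.
Local Open Scope classical_set_scope.
Local Open Scope ring_scope.

Section Aux.
Variables (R : realType) (E : normedModType R).

Lemma contf (y s : E) : continuous (fun t : R => `|y + t *: s|).
Proof.
move=> t.
apply: (@continuous_comp _ _ _ (fun t : R => y + t *: s) (Num.norm : E -> R));
  last exact: norm_continuous.
apply: cvgD; first exact: cvg_cst.
apply: cvgZl. exact: cvg_id.
Qed.

Lemma open_local (O : set (set E)) (A : set E) : is_topology O ->
  (forall x, A x -> exists U, O U /\ U x /\ U `<=` A) -> O A.
Proof.
move=> [_ [Hun _]] H.
pose I := {U : set E | O U /\ U `<=` A}.
have := Hun I (fun i : I => sval i) (fun i => proj1 (svalP i)).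
suff -> : \bigcup_(i in setT) sval (i : I) = A by [].
rewrite eqEsubset; split => x.
  by case=> i _; apply: (proj2 (svalP i)).
move=> /H [U [OU [Ux UA]]]; by exists (exist _ U (conj OU UA)).
Qed.

Lemma trans_O (O : set (set E)) (y : E) (W : set E) : linear_topology O -> O W ->
  O [set u | W (u + y)].
Proof.
move=> [Ht [Hadd _]] OW; apply: open_local => // x /= Wxy.
have [U [V [OU Ux OV Vy HUV]]] := Hadd x y W OW Wxy.
by exists U; do 2!split => //; move=> u Uu /=; apply: HUV.
Qed.

Lemma scale_O (O : set (set E)) (c : R) (W : set E) : linear_topology O -> O W ->
  O [set u | W (c *: u)].
Proof.
move=> [Ht [_ Hsc]] OW; apply: open_local => // x /= Wcx.
have [e [U [e0 OU Ux HU]]] := Hsc c x W OW Wcx.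
by exists U; do 2!split => //; move=> u Uu /=; apply: HU; rewrite // subrr normr0.
Qed.

Lemma sep_bound (O : set (set E)) : linear_topology O ->
  tau_separated0 O (@unit_sphere R E) ->
  exists e U, [/\ 0 < e, O U, U 0 & forall u, U u -> `|u| * e <= 1].
Proof.
move=> [Ht [Hadd Hsc]] [N [[W [OW [W0 WN]]] NS]].
have W00 : W ((0:R) *: (0:E)) by rewrite scale0r.
have [e [U [e0 OU U0 HU]]] := Hsc 0 0 W OW W00.
exists e, U; split => // u Uu.
rewrite leNgt; apply/negP => H.
have u0 : 0 < `|u|.
  rewrite lt_neqAle normr_ge0 andbT; apply/eqP => h; move: H.
  by rewrite -h mul0r ltr10.
have : (N `&` @unit_sphere R E) (`|u|^-1 *: u).
  split.
    apply: WN; apply: HU => //.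
    rewrite subr0 ger0_norm ?invr_ge0 ?normr_ge0 //.
    by rewrite -[X in X < _]div1r ltr_pdivrMr // mulrC.
  by rewrite /unit_sphere /= normrZ ger0_norm ?invr_ge0 ?normr_ge0 // mulVf // gt_eqF.
by rewrite NS.
Qed.

End Aux.
Arguments sep_bound {R E O}.
Arguments trans_O {R E O} y {W}.
Arguments scale_O {R E O} c {W}.

Theorem corollary2p3 (R : realType) (E : normedModType R) (O : set (set E))
  (Hlin : linear_topology O) (Hweak : weaker_than_norm O) :
  (O = [set A | open A] <-> tau_separated0 O (@unit_sphere R E)) /\
  (tau_separated0 O (@unit_sphere R E) <->
     ~ (@closed_unit_ball R E `<=` tau_closure O (@unit_sphere R E))).
Proof.
have Ht : is_topology O by case: Hlin.
split; split.
- move=> HO; exists (ball (0:E) 1); split.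
    exists (ball (0:E) 1); split; first by rewrite HO; exact: ball_open.
    by split => //; apply: ballxx.
  apply/seteqP; split => // x [].
  rewrite -ball_normE /unit_sphere /= sub0r normrN => h1 h2.
  by move: h1; rewrite h2 ltxx.
- move=> Hsep; have [e [U0 [e0 OU0 U00 HU0]]] := sep_bound Hlin Hsep.
  apply/seteqP; split => A; first exact: Hweak.
  move=> /= oA; apply: open_local => // x Ax.
  move: (oA); rewrite openE => /(_ x Ax); rewrite /interior -nbhs_ballE => -[r /= r0 Hr].
  pose c := 2 / (r * e).
  have c0 : 0 < c by rewrite /c divr_gt0 // mulr_gt0.
  exists [set y | U0 (c *: (y + - x))]; split.
    by apply: (@trans_O R E O (- x) [set u | U0 (c *: u)]) => //; exact: (scale_O c Hlin OU0).
  split; first by rewrite /= subrr scaler0.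
  move=> y /= Uy; apply: Hr.
  have := HU0 _ Uy; rewrite normrZ ger0_norm ?(ltW c0) // => h.
  rewrite -ball_normE /= -normrN opprB.
  have h2 : `|y - x| <= r / 2.
    move: h; rewrite /c; set n := `|y + - x|.
    have E1 : 2 / (r * e) * n * e = (2 * n) / r.
      by field; rewrite ?gt_eqF.
    rewrite E1 ler_pdivrMr // mul1r => h.
    rewrite ler_pdivlMr //; lra.
  by apply: le_lt_trans h2 _; rewrite ltr_pdivrMr // ltr_pMr // ltr1n.
- move=> [N [[W [OW [W0 WN]]] NS]] Hsub.
  have : tau_closure O (@unit_sphere R E) 0.
    by apply: Hsub; rewrite /closed_unit_ball /= normr0.
  move=> /(_ N) []; first by exists W.
  by move=> z; rewrite NS.
- move=> Hnot; apply: contrapT => Hns; apply: Hnot.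
  move=> y Hy N [V [OV [Vy VN]]].
  have OW := trans_O y Hlin OV.
  have [_ [_ Hsc]] := Hlin.
  have W00 : [set u | V (u + y)] ((0:R) *: (0:E)) by rewrite scale0r /= add0r.
  have [e [U0 [e0 OU0 U00 HU0]]] := Hsc 0 0 _ OW W00.
  have OU1 := scale_O (2 / e) Hlin OU0.
  pose U1 := [set u | U0 (2 / e *: u)].
  have : U1 `&` @unit_sphere R E !=set0.
    apply: contrapT => H; apply: Hns; exists U1; split.
      by exists U1; split => //; split => //; rewrite /U1 /= scaler0.
    apply/seteqP; split => // z zz; exfalso; apply: H; by exists z.
  move=> [s [U1s Ss]].
  have claim : forall k : R, `|k| = 1 -> 1 <= `|y + k *: s| ->
      N `&` @unit_sphere R E !=set0.
    move=> k k1 H1.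
    have HC : {within `[0, 1], continuous (fun t : R => `|y + t *: (k *: s)|)}.
      by apply: continuous_subspaceT; exact: contf.
    have := @IVT R (fun t => `|y + t *: (k *: s)|) 0 1 1 ler01 HC.
    case.
      rewrite /= scale0r addr0 scale1r ge_min le_max H1 orbT andbT.
      by move: Hy; rewrite /closed_unit_ball /= => ->.
    move=> t; rewrite in_itv /= => /andP [t0 t1] Ht1.
    exists (y + t *: (k *: s)); split; last by [].
    apply: VN.
    have := HU0 (t * k * e / 2) _ _ U1s; rewrite /= addrC.
    have -> : t * k * e / 2 *: (2 / e *: s) = t *: (k *: s).
      rewrite !scalerA; congr (_ *: _); field; rewrite gt_eqF //.
    move=> HH; rewrite addrC; apply: HH.
    rewrite oppr0 add0r -mulrA -mulrA normrM ger0_norm // normrM k1 mul1r.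
    rewrite ger0_norm; last by rewrite divr_ge0 // ltW.
    have h2 : t * (e / 2) <= e / 2 by rewrite ler_piMl // divr_ge0 // ltW.
    by apply: le_lt_trans h2 _; rewrite ltr_pdivrMr // ltr_pMr // ltr1n.
  case: (lerP 1 `|y + s|) => Hs.
    by apply: (claim 1); rewrite ?normr1 // scale1r.
  apply: (claim (-1)); first by rewrite normrN normr1.
  rewrite scaleN1r.
  have : `|s + s| <= `|y + s| + `|y - s|.
    have -> : s + s = (y + s) - (y - s) by rewrite opprB [y + s]addrC addrCA addrK.
    exact: ler_normB.
  have -> : `|s + s| = 2 by rewrite -mulr2n normrMn Ss.
  lra.
Qed.
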